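(* Let $\theta\in\mathbb{R}$, $k>0$, $\sigma\ge0$, and consider on $\mathbb{R}^2$ $$\dot\xi=-\big(z+k+\sigma(\theta+z)^2\big)\xi,\qquad \dot z=\xi^2,$$ with output $y=\xi$. Then the system is forward complete, Lagrange and Lyapunov stable (with respect to the full state), every point $(0,z)$ is an equilibrium, and the system is GAOS with respect to the output $\xi$. However, when $\sigma=0$ the system is not UGAOS: there is no $T>0$ such that $|\xi(t)|\le 1/2$ for all $t\ge T$ and all initial conditions with $|(\xi_0,z_0)|\le\sqrt{1+(k+1)^2}$. *)

(* Defs.v *)
From Stdlib Require Import Reals.
From Coquelicot Require Import Coquelicot.
Open Scope R_scope.

Definition nrm2 (a b : R) : R := sqrt (a ^ 2 + b ^ 2).

(* A (forward) solution on [0, +oo) of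
     xi' = -(z + k + sigma (theta + z)^2) xi,   z' = xi^2.
   The functions are R -> R; only their values on [0,+oo) matter:
   the ODE holds at every t > 0 and the solution is right-continuous at 0. *)
Definition is_sol (theta k sigma : R) (xi z : R -> R) : Prop :=
  (forall t, 0 < t ->
     is_derive xi t (- (z t + k + sigma * (theta + z t) ^ 2) * xi t) /\
     is_derive z t (xi t ^ 2)) /\
  (forall eps, 0 < eps -> exists d, 0 < d /\
     forall t, 0 <= t < d -> Rabs (xi t - xi 0) < eps /\ Rabs (z t - z 0) < eps).

(* Forward completeness: from every initial condition there is a solution
   defined on the whole of [0,+oo) (the vector field is smooth, so
   solutions are unique and this says maximal solutions are global). *)
Definition forward_complete (theta k sigma : R) : Prop :=
  forall xi0 z0, exists xi z, is_sol theta k sigma xi z /\ xi 0 = xi0 /\ z 0 = z0.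

Definition lagrange_stable (theta k sigma : R) : Prop :=
  forall xi z, is_sol theta k sigma xi z ->
    exists M, forall t, 0 <= t -> nrm2 (xi t) (z t) <= M.

Definition lyapunov_stable (theta k sigma : R) : Prop :=
  forall eps, 0 < eps -> exists delta, 0 < delta /\
    forall xi z, is_sol theta k sigma xi z -> nrm2 (xi 0) (z 0) < delta ->
      forall t, 0 <= t -> nrm2 (xi t) (z t) < eps.

Definition is_equilibrium (theta k sigma : R) (xi0 z0 : R) : Prop :=
  is_sol theta k sigma (fun _ => xi0) (fun _ => z0).

Definition output_stable (theta k sigma : R) : Prop :=
  forall eps, 0 < eps -> exists delta, 0 < delta /\
    forall xi z, is_sol theta k sigma xi z -> nrm2 (xi 0) (z 0) < delta ->
      forall t, 0 <= t -> Rabs (xi t) < eps.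

Definition output_attractive (theta k sigma : R) : Prop :=
  forall xi z, is_sol theta k sigma xi z -> is_lim xi p_infty 0.

Definition GAOS (theta k sigma : R) : Prop :=
  output_stable theta k sigma /\ output_attractive theta k sigma.

(* Main.v *)
Require Import Defs.
From Stdlib Require Import Reals Lra Psatz Classical ClassicalEpsilon Ranalysis5.
From Coquelicot Require Import Coquelicot.
Open Scope R_scope.
From Stdlib Require Import Reals Lra Psatz ClassicalEpsilon Ranalysis5.
From Coquelicot Require Import Coquelicot.
Open Scope R_scope.

Lemma cont_eps f x : continuity_pt f x -> forall eps, 0<eps ->
  exists d, 0<d /\ forall y, Rabs (y-x) < d -> Rabs (f y - f x) < eps.
Proof.
  intros H eps He; destruct (H eps He) as [d [Hd H2]]; exists d; split; auto.
  intros y Hy; destruct (Req_dec y x) as [->|n].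
  - rewrite Rminus_eq_0, Rabs_R0; auto.
  - apply (H2 y); split; [split; [exact I| auto] | exact Hy].
Qed.

Lemma deriv_cont f x l : is_derive f x l -> continuity_pt f x.
Proof.
  intros H; apply derivable_continuous_pt; exists l; apply is_derive_Reals; exact H.
Qed.

Definition rc (f : R -> R) := forall eps, 0 < eps -> exists d, 0 < d /\
  forall t, 0 <= t < d -> Rabs (f t - f 0) < eps.

Lemma rc_comp f h : rc f -> continuity_pt h (f 0) -> rc (fun t => h (f t)).
Proof.
  intros Hf Hh eps He. destruct (cont_eps _ _ Hh eps He) as [d1 [Hd1 H1]].
  destruct (Hf d1 Hd1) as [d [Hd H]]. exists d; split; auto.
Qed.

Lemma rc_plus f g : rc f -> rc g -> rc (fun t => f t + g t).
Proof.
  intros Hf Hg eps He. destruct (Hf (eps/2)) as [d1 [Hd1 H1]]; [lra|].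
  destruct (Hg (eps/2)) as [d2 [Hd2 H2]]; [lra|].
  exists (Rmin d1 d2); split; [apply Rmin_pos; auto|].
  intros t Ht. assert (A1 := H1 t ltac:(split; [lra| eapply Rlt_le_trans; [apply Ht| apply Rmin_l]])).
  assert (A2 := H2 t ltac:(split; [lra| eapply Rlt_le_trans; [apply Ht| apply Rmin_r]])).
  revert A1 A2; unfold Rabs; repeat destruct Rcase_abs; lra.
Qed.

Lemma cont_rc f : continuity_pt f 0 -> rc f.
Proof.
  intros H eps He. destruct (cont_eps _ _ H eps He) as [d [Hd H1]]. exists d; split; auto.
  intros t Ht; apply H1. rewrite Rminus_0_r, Rabs_right; lra.
Qed.

Lemma rc_le f c T : rc f -> 0 < T -> (forall s, 0 < s < T -> f s <= c) -> f 0 <= c.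
Proof.
  intros Hf HT H. destruct (Rle_lt_dec (f 0) c) as [h|h]; auto.
  destruct (Hf (f 0 - c)) as [d [Hd H1]]; [lra|].
  assert (0 < Rmin d T) by (apply Rmin_pos; auto).
  assert (Rmin d T <= d) by apply Rmin_l. assert (Rmin d T <= T) by apply Rmin_r.
  specialize (H1 (Rmin d T/2) ltac:(lra)). specialize (H (Rmin d T/2) ltac:(lra)).
  revert H1; unfold Rabs; destruct Rcase_abs; lra.
Qed.

Lemma rc_ge f c T : rc f -> 0 < T -> (forall s, 0 < s < T -> c <= f s) -> c <= f 0.
Proof.
  intros Hf HT H. destruct (Rle_lt_dec c (f 0)) as [h|h]; auto.
  destruct (Hf (c - f 0)) as [d [Hd H1]]; [lra|].
  assert (0 < Rmin d T) by (apply Rmin_pos; auto).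
  assert (Rmin d T <= d) by apply Rmin_l. assert (Rmin d T <= T) by apply Rmin_r.
  specialize (H1 (Rmin d T/2) ltac:(lra)). specialize (H (Rmin d T/2) ltac:(lra)).
  revert H1; unfold Rabs; destruct Rcase_abs; lra.
Qed.

Lemma mvt f df a b : a < b ->
  (forall x, a <= x <= b -> continuity_pt f x) ->
  (forall x, a < x < b -> is_derive f x (df x)) ->
  exists c, a <= c <= b /\ f b - f a = df c * (b - a).
Proof.
  intros Hab Hc Hd. destruct (MVT_gen f a b df) as [c [Hc1 Hc2]].
  - rewrite Rmin_left, Rmax_right; try lra. exact Hd.
  - rewrite Rmin_left, Rmax_right; try lra. exact Hc.
  - rewrite Rmin_left, Rmax_right in Hc1; try lra. exists c; auto.
Qed.

Lemma const_pos f : (forall t, 0 < t -> is_derive f t 0) -> rc f ->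
  forall t, 0 <= t -> f t = f 0.
Proof.
  intros Hd Hr.
  assert (K : forall s t, 0 < s -> s <= t -> f t = f s).
  { intros s t Hs Hst. destruct (Req_dec s t) as [->|n]; auto.
    destruct (mvt f (fun _ => 0) s t) as [c [_ Hc]]; try lra.
    - intros x Hx; apply (deriv_cont _ _ 0), Hd; lra.
    - intros x Hx; apply Hd; lra. }
  intros t Ht. destruct (Req_dec t 0) as [->|n]; auto.
  apply Rle_antisym.
  - apply (rc_ge _ _ t); auto; try lra. intros s Hs. rewrite (K s t); lra.
  - apply (rc_le _ _ t); auto; try lra. intros s Hs. rewrite (K s t); lra.
Qed.

Lemma mono_pos f df : (forall t, 0 < t -> is_derive f t (df t)) -> (forall t, 0 < t -> 0 <= df t) -> rc f ->
  forall s t, 0 <= s <= t -> f s <= f t.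
Proof.
  intros Hd Hp Hr.
  assert (K : forall s t, 0 < s -> s <= t -> f s <= f t).
  { intros s t Hs Hst. destruct (Req_dec s t) as [->|n]; [lra|].
    destruct (mvt f df s t) as [c [Hc1 Hc]]; try lra.
    - intros x Hx; apply (deriv_cont _ _ (df x)), Hd; lra.
    - intros x Hx; apply Hd; lra.
    - assert (0 <= df c) by (apply Hp; lra). nra. }
  intros s t [Hs Hst]. destruct (Req_dec s 0) as [->|n].
  - destruct (Req_dec t 0) as [->|n']; [lra|].
    apply (rc_le _ _ t); auto; try lra. intros u Hu. apply K; lra.
  - apply K; lra.
Qed.

Definition aa th k s z := z + k + s * (th + z)^2.
Definition FF th k s z := z^2/2 + k*z + s*(th+z)^3/3.

Lemma is_derive_val (f : R -> R) (x l l' : R) : is_derive f x l -> l = l' -> is_derive f x l'.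
Proof. intros H ->; exact H. Qed.

Lemma FF_der (th k s z : R) : is_derive (FF th k s) z (aa th k s z).
Proof. unfold FF, aa. auto_derive; auto. field. Qed.

Lemma sol_parts th k s xi z : is_sol th k s xi z ->
  (forall t, 0 < t -> is_derive xi t (- (z t + k + s * (th + z t) ^ 2) * xi t) /\
     is_derive z t (xi t ^ 2)) /\ rc xi /\ rc z.
Proof.
  intros [H1 H2]; split; [exact H1|split].
  - intros e He; destruct (H2 e He) as [d [Hd H]]; exists d; split; auto; apply H.
  - intros e He; destruct (H2 e He) as [d [Hd H]]; exists d; split; auto; apply H.
Qed.

Lemma energy th k s xi z : is_sol th k s xi z -> forall t, 0 <= t ->
  xi t ^ 2 / 2 + FF th k s (z t) = xi 0 ^ 2 / 2 + FF th k s (z 0).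
Proof.
  intros Hs. destruct (sol_parts _ _ _ _ _ Hs) as [Hd [Rx Rz]].
  apply (const_pos (fun t => xi t ^ 2 / 2 + FF th k s (z t))).
  - intros t Ht. destruct (Hd t Ht) as [Dx Dz].
    assert (D2 : forall x : R, is_derive (fun x => x ^ 2 / 2) x x) by (intros; auto_derive; auto; field).
    eapply is_derive_val.
    + apply (is_derive_plus (fun t => xi t ^ 2 / 2) (fun t => FF th k s (z t))).
      * apply (is_derive_comp (fun x => x ^ 2 / 2) xi t _ _ (D2 (xi t)) Dx).
      * apply (is_derive_comp (FF th k s) z t _ _ (FF_der _ _ _ _) Dz).
    + unfold aa. cbn -[Rinv Rdiv pow]. ring.
  - apply rc_plus.
    + apply (rc_comp xi (fun x => x ^ 2 / 2)); auto. apply (deriv_cont _ _ (xi 0)). auto_derive; auto; field.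
    + apply (rc_comp z (FF th k s)); auto. apply (deriv_cont _ _ _ (FF_der _ _ _ _)).
Qed.

Lemma zmono th k s xi z : is_sol th k s xi z -> forall a b, 0 <= a <= b -> z a <= z b.
Proof.
  intros Hs. destruct (sol_parts _ _ _ _ _ Hs) as [Hd [Rx Rz]].
  apply (mono_pos z (fun t => xi t ^ 2)); auto.
  - intros t Ht; apply Hd; auto.
  - intros t _; apply pow2_ge_0.
Qed.

Lemma zbound th k s E0 z0 w : 0 < k -> 0 <= s -> FF th k s w <= E0 ->
  w <= Rabs th + 2 * Rabs E0 + Rabs z0 + 1.
Proof.
  intros Hk Hs H. assert (A1 := Rabs_pos E0). assert (A2 := Rabs_pos z0).
  assert (A3 := Rle_abs E0). assert (A4 := Rabs_pos th).
  destruct (Rle_lt_dec w (Rabs th + 1)) as [h|h]; [lra|].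
  assert (- th <= Rabs th) by (rewrite <- Rabs_Ropp; apply Rle_abs).
  assert (0 <= s * (th + w) ^ 3 / 3).
  { assert (0 <= (th + w) ^ 3) by (apply pow_le; lra). apply Rmult_le_pos; [|lra]. apply Rmult_le_pos; auto. }
  unfold FF in H. assert (w ^ 2 / 2 >= w / 2) by nra. assert (k * w > 0) by nra. lra.
Qed.

Lemma negF_bound th k s w B : 0 < k -> 0 <= s -> Rabs w <= B ->
  - FF th k s w <= k * B + s * (Rabs th + B) ^ 3 / 3.
Proof.
  intros Hk Hs H. unfold FF.
  assert (A1 : - (k * w) <= k * B).
  { assert (- w <= B) by (eapply Rle_trans; [|apply H]; rewrite <- Rabs_Ropp; apply Rle_abs). nra. }
  assert (A2 : - ((th + w) ^ 3) <= (Rabs th + B) ^ 3).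
  { eapply Rle_trans; [apply Rle_abs|]. rewrite Rabs_Ropp, <- RPow_abs.
    apply pow_incr. split; [apply Rabs_pos|]. eapply Rle_trans; [apply Rabs_triang| lra]. }
  assert (A3 : s * - ((th + w) ^ 3) <= s * (Rabs th + B) ^ 3) by (apply Rmult_le_compat_l; auto).
  assert (0 <= w ^ 2) by apply pow2_ge_0. lra.
Qed.

Lemma sol_bounds th k s xi z : 0 < k -> 0 <= s -> is_sol th k s xi z ->
  exists Zu K, forall t, 0 <= t -> z 0 <= z t <= Zu /\ Rabs (z t) <= Rabs (z 0) + Zu /\ xi t ^ 2 <= K.
Proof.
  intros Hk Hs Hsol.
  set (E0 := xi 0 ^ 2 / 2 + FF th k s (z 0)).
  set (Zu := Rabs th + 2 * Rabs E0 + Rabs (z 0) + 1).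
  set (B := Rabs (z 0) + Zu).
  exists Zu, (2 * (Rabs E0 + k * B + s * (Rabs th + B) ^ 3 / 3)).
  intros t Ht. assert (He := energy _ _ _ _ _ Hsol t Ht). fold E0 in He.
  assert (Hm := zmono _ _ _ _ _ Hsol 0 t ltac:(lra)).
  assert (0 <= xi t ^ 2) by apply pow2_ge_0.
  assert (Hz : z t <= Zu) by (apply (zbound th k s E0); auto; lra).
  assert (A1 := Rabs_pos E0). assert (A2 := Rabs_pos (z 0)). assert (A3 := Rle_abs E0).
  assert (A4 : - z 0 <= Rabs (z 0)) by (rewrite <- Rabs_Ropp; apply Rle_abs).
  assert (HB : Rabs (z t) <= B).
  { assert (A5 := Rabs_pos th). apply Rabs_le. unfold B, Zu in *. split; lra. }
  split; [lra|]. split; [unfold B in HB; exact HB|].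
  assert (HF := negF_bound th k s (z t) B Hk Hs HB). lra.
Qed.

Lemma lagrange th k s : 0 < k -> 0 <= s -> lagrange_stable th k s.
Proof.
  intros Hk Hs xi z Hsol. destruct (sol_bounds _ _ _ _ _ Hk Hs Hsol) as [Zu [K H]].
  exists (sqrt (K + (Rabs (z 0) + Zu) ^ 2)). intros t Ht. destruct (H t Ht) as [_ [H1 H2]].
  unfold nrm2. apply sqrt_le_1_alt.
  assert (z t ^ 2 <= (Rabs (z 0) + Zu) ^ 2).
  { rewrite <- (pow2_abs (z t)). apply pow_incr. split; [apply Rabs_pos| auto]. }
  lra.
Qed.

Lemma Fgrow th k s z0 w : 0 < k -> 0 <= s -> - k / 2 <= z0 -> z0 <= w ->
  k / 2 * (w - z0) <= FF th k s w - FF th k s z0.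
Proof.
  intros Hk Hs H1 H2.
  set (p := th + w). set (q := th + z0).
  assert (E : FF th k s w - FF th k s z0 = (w - z0) * ((w + z0) / 2 + k + s / 3 * (p ^ 2 + p * q + q ^ 2))).
  { unfold FF, p, q. field. }
  rewrite E. rewrite (Rmult_comm (k/2)). apply Rmult_le_compat_l; [lra|].
  assert (0 <= p ^ 2 + p * q + q ^ 2) by nra.
  assert (0 <= s / 3 * (p ^ 2 + p * q + q ^ 2)) by (apply Rmult_le_pos; lra). lra.
Qed.

Lemma lyap th k s : 0 < k -> 0 <= s -> lyapunov_stable th k s.
Proof.
  intros Hk Hs eps He. set (d := Rmin (k / 2) (eps / 3)).
  assert (Hd0 : 0 < d) by (apply Rmin_pos; lra).
  assert (Hd1 : d <= k / 2) by apply Rmin_l. assert (Hd2 : d <= eps / 3) by apply Rmin_r.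
  exists d; split; auto. intros xi z Hsol Hn t Ht.
  unfold nrm2 in *. rewrite <- (sqrt_pow2 d) in Hn by lra. apply sqrt_lt_0_alt in Hn.
  rewrite <- (sqrt_pow2 eps) by lra. apply sqrt_lt_1_alt. split; [nra|].
  set (x0 := xi 0) in *. set (z0 := z 0) in *. set (x := xi t). set (w := z t).
  assert (Ex := energy _ _ _ _ _ Hsol t Ht). fold x0 z0 x w in Ex.
  assert (Hm := zmono _ _ _ _ _ Hsol 0 t ltac:(lra)). fold z0 w in Hm.
  assert (Hx0 : x0 ^ 2 < d ^ 2) by nra. assert (Hz0 : z0 ^ 2 < d ^ 2) by nra.
  assert (Hz0' : - d < z0 < d) by (split; nra).
  assert (Hg := Fgrow th k s z0 w Hk Hs ltac:(lra) Hm).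
  assert (0 <= x ^ 2) by apply pow2_ge_0.
  assert (0 <= k / 2 * (w - z0)) by (apply Rmult_le_pos; lra).
  assert (A1 : x ^ 2 <= x0 ^ 2) by lra.
  assert (A2 : k * (w - z0) <= x0 ^ 2) by lra.
  assert (A3 : x0 ^ 2 <= d * k / 2) by nra.
  assert (A4 : w - z0 <= d / 2).
  { apply Rmult_le_reg_l with k; [lra|]. nra. }
  assert (A5 : w ^ 2 <= (3/2 * d) ^ 2) by nra.
  nra.
Qed.

Lemma ex_deriv_cont (f : R -> R) x : ex_derive f x -> continuity_pt f x.
Proof. intros [l Hl]; exact (deriv_cont _ _ _ Hl). Qed.

Lemma rc_pair (xi z : R -> R) : rc xi -> rc z -> forall eps, 0 < eps -> exists d, 0 < d /\
     forall t, 0 <= t < d -> Rabs (xi t - xi 0) < eps /\ Rabs (z t - z 0) < eps.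
Proof.
  intros H1 H2 eps He. destruct (H1 eps He) as [d1 [Hd1 A1]]. destruct (H2 eps He) as [d2 [Hd2 A2]].
  exists (Rmin d1 d2); split; [apply Rmin_pos; auto|].
  intros t Ht. assert (Rmin d1 d2 <= d1) by apply Rmin_l. assert (Rmin d1 d2 <= d2) by apply Rmin_r.
  split; [apply A1| apply A2]; lra.
Qed.

Lemma equil th k s z0 : is_equilibrium th k s 0 z0.
Proof.
  split.
  - intros t _. split.
    + eapply is_derive_val; [apply is_derive_const|]. change (@eq R 0 (- (z0 + k + s * (th + z0) ^ 2) * 0)). ring.
    + eapply is_derive_val; [apply is_derive_const|]. change (@eq R 0 (0 ^ 2)). ring.
  - intros eps He. exists 1. split; [lra|]. intros t _. split; rewrite Rminus_eq_0, Rabs_R0; auto.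
Qed.

Lemma out_stable th k s : 0 < k -> 0 <= s -> output_stable th k s.
Proof.
  intros Hk Hs eps He. destruct (lyap th k s Hk Hs eps He) as [d [Hd H]].
  exists d; split; auto. intros xi z Hsol Hn t Ht.
  eapply Rle_lt_trans; [|apply (H xi z Hsol Hn t Ht)].
  rewrite <- sqrt_Rsqr_abs. unfold nrm2. apply sqrt_le_1_alt. unfold Rsqr.
  assert (0 <= z t ^ 2) by apply pow2_ge_0. simpl. lra.
Qed.

Lemma aa_bound th k s w B : 0 <= s -> Rabs w <= B -> aa th k s w <= B + k + s * (Rabs th + B) ^ 2.
Proof.
  intros Hs H. unfold aa.
  assert (w <= B) by (eapply Rle_trans; [apply Rle_abs| exact H]).
  assert ((th + w) ^ 2 <= (Rabs th + B) ^ 2).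
  { rewrite <- (pow2_abs (th + w)). apply pow_incr. split; [apply Rabs_pos|].
    eapply Rle_trans; [apply Rabs_triang| lra]. }
  assert (s * (th + w) ^ 2 <= s * (Rabs th + B) ^ 2) by (apply Rmult_le_compat_l; auto). lra.
Qed.

Lemma attract th k s : 0 < k -> 0 <= s -> output_attractive th k s.
Proof.
  intros Hk Hs xi z Hsol.
  destruct (sol_parts _ _ _ _ _ Hsol) as [Hd [Rx Rz]].
  destruct (sol_bounds _ _ _ _ _ Hk Hs Hsol) as [Zu [K HB]].
  set (P y := exists t, 0 <= t /\ y = z t).
  destruct (completeness P) as [S [HS1 HS2]].
  { exists Zu. intros y [t [Ht ->]]. apply (HB t Ht). }
  { exists (z 0). exists 0. split; [lra| auto]. }
  assert (Zle : forall t, 0 <= t -> z t <= S) by (intros t Ht; apply HS1; exists t; auto).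
  assert (Zap : forall eta, 0 < eta -> exists T, 0 <= T /\ S - eta < z T).
  { intros eta He. apply NNPP. intros Hn.
    assert (S <= S - eta); [|lra]. apply HS2. intros y [t [Ht ->]].
    destruct (Rle_lt_dec (z t) (S - eta)) as [h|h]; auto. exfalso; apply Hn; exists t; auto. }
  set (Bz := Rabs (z 0) + Zu).
  set (A := Bz + k + s * (Rabs th + Bz) ^ 2).
  assert (HA : forall t, 0 <= t -> aa th k s (z t) <= A) by (intros t Ht; apply aa_bound; auto; apply (HB t Ht)).
  assert (K0 : 0 <= K) by (eapply Rle_trans; [apply (pow2_ge_0 (xi 0))| apply (HB 0); lra]).
  assert (A0 : 0 <= A).
  { assert (Hb := proj1 (proj2 (HB 0 (Rle_refl 0)))). assert (0 <= Rabs (z 0)) by apply Rabs_pos.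
    assert (0 <= s * (Rabs th + Bz) ^ 2) by (apply Rmult_le_pos; auto; apply pow2_ge_0).
    unfold A, Bz in *. lra. }
  apply is_lim_spec. intros eps. simpl.
  set (e := eps * eps). assert (He : 0 < e) by (unfold e; destruct eps; simpl; nra).
  set (D := 2 * A * K + 1). assert (HD : 0 < D) by (unfold D; nra).
  set (h := e / (2 * D)). assert (Hh : 0 < h) by (unfold h; apply Rdiv_lt_0_compat; lra).
  destruct (Zap (e / 2 * h)) as [T0 [HT0 HzT0]]; [nra|].
  exists (Rmax T0 1). intros t Ht.
  assert (Ht0 : T0 < t) by (eapply Rle_lt_trans; [apply Rmax_l| exact Ht]).
  assert (Ht1 : 1 < t) by (eapply Rle_lt_trans; [apply Rmax_r| exact Ht]).
  assert (Hlt : xi t ^ 2 < e).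
  { destruct (Rlt_or_le (xi t ^ 2) e) as [h0|h0]; auto. exfalso.
    assert (Low : forall u, t <= u <= t + h -> e / 2 <= xi u ^ 2).
    { intros u Hu. destruct (Req_dec u t) as [->|n]; [lra|].
      destruct (mvt (fun v => xi v ^ 2) (fun v => INR 2 * (- (z v + k + s * (th + z v) ^ 2) * xi v) * xi v ^ Init.Nat.pred 2) t u) as [c [Hc Hc2]]; try lra.
      - intros x Hx. apply ex_deriv_cont. eexists. apply is_derive_pow. apply Hd; lra.
      - intros x Hx. apply is_derive_pow. apply Hd; lra.
      - assert (Hac := HA c ltac:(lra)). unfold aa in Hac.
        assert (Hxc := proj2 (proj2 (HB c ltac:(lra)))).
        assert (0 <= xi c ^ 2) by apply pow2_ge_0.
        assert (E : INR 2 * (- (z c + k + s * (th + z c) ^ 2) * xi c) * xi c ^ Init.Nat.pred 2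
                    = - 2 * (z c + k + s * (th + z c) ^ 2) * xi c ^ 2) by (simpl; ring).
        rewrite E in Hc2.
        assert (- 2 * (z c + k + s * (th + z c) ^ 2) * xi c ^ 2 >= - D) by (unfold D; nra).
        assert (D * h = e / 2) by (unfold h; field; lra).
        nra. }
    destruct (mvt z (fun v => xi v ^ 2) t (t + h)) as [c [Hc Hc2]]; try lra.
    - intros x Hx. apply (deriv_cont _ _ (xi x ^ 2)). apply Hd; lra.
    - intros x Hx. apply Hd; lra.
    - assert (Lc := Low c Hc). assert (Zle' := Zle (t + h) ltac:(lra)).
      assert (zm := zmono _ _ _ _ _ Hsol T0 t ltac:(lra)).
      assert (e / 2 * h <= xi c ^ 2 * h) by (apply Rmult_le_compat_r; lra).
      replace (t + h - t) with h in Hc2 by ring. lra. }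
  destruct (Rlt_or_le (Rabs (xi t - 0)) eps) as [h0|h0]; auto. exfalso.
  rewrite Rminus_0_r in h0. rewrite <- (pow2_abs (xi t)) in Hlt. unfold e in Hlt.
  destruct eps; simpl in *. nra.
Qed.

Lemma not_ugaos th k : 0 < k ->
  ~ (exists T, 0 < T /\
          forall xi z, is_sol th k 0 xi z ->
            nrm2 (xi 0) (z 0) <= sqrt (1 + (k + 1) ^ 2) ->
            forall t, T <= t -> Rabs (xi t) <= 1 / 2).
Proof.
  intros Hk [T [HT H]].
  set (xi t := 2 * exp (t - T) / (exp (t - T) ^ 2 + 1)).
  set (z t := (exp (t - T) ^ 2 - 1) / (exp (t - T) ^ 2 + 1) - k).
  assert (Pos : forall t, 0 < exp (t - T) ^ 2 + 1) by (intros t; assert (0 < exp (t - T)) by apply exp_pos; nra).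
  assert (Dx : forall t, is_derive xi t (- (z t + k + 0 * (th + z t) ^ 2) * xi t)).
  { intros t. unfold xi, z. auto_derive.
    - assert (0 < exp (t + - T)) by apply exp_pos. nra.
    - assert (0 < exp (t + - T)) by apply exp_pos. unfold Rminus. field. nra. }
  assert (Dz : forall t, is_derive z t (xi t ^ 2)).
  { intros t. unfold xi, z. auto_derive.
    - assert (0 < exp (t + - T)) by apply exp_pos. nra.
    - assert (0 < exp (t + - T)) by apply exp_pos. unfold Rminus. field. nra. }
  assert (Hsol : is_sol th k 0 xi z).
  { split.
    - intros t _; split; auto.
    - apply rc_pair; apply cont_rc; apply (deriv_cont _ _ _ (Dx 0) ) || apply (deriv_cont _ _ _ (Dz 0)). }
  assert (Hn : nrm2 (xi 0) (z 0) <= sqrt (1 + (k + 1) ^ 2)).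
  { unfold nrm2. apply sqrt_le_1_alt.
    set (x := exp (0 - T)). assert (Hx : 0 < x) by apply exp_pos.
    set (w := (x ^ 2 - 1) / (x ^ 2 + 1)).
    assert (Hw : 0 < w + 1).
    { replace (w + 1) with (2 * x ^ 2 / (x ^ 2 + 1)) by (unfold w; field; nra).
      apply Rdiv_lt_0_compat; nra. }
    assert (Hid : xi 0 ^ 2 + w ^ 2 = 1) by (unfold xi, w; fold x; field; nra).
    assert (Hz : z 0 = w - k) by (unfold z, w; fold x; reflexivity).
    rewrite Hz. nra. }
  specialize (H xi z Hsol Hn T (Rle_refl T)).
  unfold xi in H. rewrite Rminus_eq_0, exp_0 in H.
  replace (2 * 1 / (1 ^ 2 + 1)) with 1 in H by field. rewrite Rabs_R1 in H. lra.
Qed.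

Lemma is_derive_plusR (f g : R -> R) x a b : is_derive f x a -> is_derive g x b -> is_derive (fun y => f y + g y) x (a + b).
Proof. intros H1 H2; apply is_derive_Reals; apply (derivable_pt_lim_plus f g x a b); apply is_derive_Reals; auto. Qed.

Lemma scalar_ode (g : R -> R) c z0 b L :
  c < z0 < b -> (forall u, continuity_pt g u) -> (forall u, c < u < b -> 0 < g u) ->
  0 < L -> (forall u, z0 <= u < b -> g u <= L * (b - u)) ->
  exists zs : R -> R, zs 0 = z0 /\ (forall t, 0 < t -> is_derive zs t (g (zs t))) /\ rc zs /\
    (forall t, 0 <= t -> z0 <= zs t < b).
Proof.
  intros [Hcz Hzb] Gc Gp HL Glip.
  set (f := fun s => / g s).
  assert (Fc : forall u, c < u < b -> continuity_pt f u).
  { intros u Hu. apply (continuity_pt_inv g u (Gc u)). specialize (Gp u Hu); lra. }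
  set (G := fun w => RInt f z0 w).
  assert (GD : forall w, c < w < b -> is_derive G w (f w)).
  { intros w Hw. apply (is_derive_RInt f G z0 w).
    - assert (Hr : 0 < Rmin (w - c) (b - w)) by (apply Rmin_pos; lra).
      exists (mkposreal _ Hr). intros y Hy. simpl in Hy. change (Rabs (y - w) < Rmin (w - c) (b - w)) in Hy.
      assert (Rmin (w - c) (b - w) <= w - c) by apply Rmin_l.
      assert (Rmin (w - c) (b - w) <= b - w) by apply Rmin_r.
      apply Rabs_lt_between' in Hy.
      apply (RInt_correct (V:=R_CompleteNormedModule) f z0 y). apply (ex_RInt_continuous (V:=R_CompleteNormedModule)). intros x Hx.
      apply continuity_pt_filterlim. apply Fc.
      assert (Rmin z0 y <= x) by lra. assert (x <= Rmax z0 y) by lra.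
      split.
      + apply Rlt_le_trans with (Rmin z0 y); auto. apply Rmin_glb_lt; lra.
      + apply Rle_lt_trans with (Rmax z0 y); auto. apply Rmax_lub_lt; lra.
    - apply continuity_pt_filterlim. apply Fc; auto. }
  assert (Gcont : forall w, c < w < b -> continuity_pt G w) by (intros w Hw; exact (deriv_cont _ _ _ (GD w Hw))).
  assert (G0 : G z0 = 0) by (unfold G; rewrite RInt_point; reflexivity).
  assert (Glt : forall u v, c < u -> u < v -> v < b -> G u < G v).
  { intros u v Hu Huv Hv. destruct (mvt G f u v) as [x [Hx Hx2]]; auto.
    - intros x Hx; apply Gcont; lra.
    - intros x Hx; apply GD; lra.
    - assert (0 < f x) by (unfold f; apply Rinv_0_lt_compat, Gp; lra).
      assert (0 < f x * (v - u)) by (apply Rmult_lt_0_compat; lra). lra. }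
  assert (Gle : forall u v, c < u -> u <= v -> v < b -> G u <= G v).
  { intros u v Hu Huv Hv. destruct (Req_dec u v) as [->|n]; [lra|]. apply Rlt_le, Glt; lra. }
  assert (Ginv : forall u v, z0 <= u < b -> z0 <= v < b -> G u < G v -> u < v).
  { intros u v Hu Hv H. destruct (Rlt_le_dec u v) as [h|h]; auto.
    assert (G v <= G u) by (apply Gle; lra). lra. }
  assert (Div : forall t, exists w, z0 <= w < b /\ t < G w).
  { intros t.
    set (H := fun w => G w + ln (b - w) / L).
    assert (HD : forall w, c < w < b -> is_derive H w (f w - / (L * (b - w)))).
    { intros w Hw. unfold H.
      assert (Dl : is_derive (fun w => ln (b - w) / L) w (- / (L * (b - w)))).
      { auto_derive; [lra| field; split; lra]. }
      eapply is_derive_val; [apply is_derive_plusR; [apply GD; auto| exact Dl]| ring]. }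
    assert (Hm : forall w, z0 <= w < b -> H z0 <= H w).
    { intros w Hw. destruct (Req_dec z0 w) as [->|n]; [lra|].
      destruct (mvt H (fun w => f w - / (L * (b - w))) z0 w) as [x [Hx Hx2]]; try lra.
      - intros x Hx. apply (deriv_cont _ _ _ (HD x ltac:(lra))).
      - intros x Hx. apply HD; lra.
      - assert (g x <= L * (b - x)) by (apply Glip; lra).
        assert (0 < g x) by (apply Gp; lra).
        assert (/ (L * (b - x)) <= f x) by (unfold f; apply Rinv_le_contravar; auto).
        assert (0 <= (f x - / (L * (b - x))) * (w - z0)) by (apply Rmult_le_pos; lra). lra. }
    set (w := b - (b - z0) * exp (- (L * (Rabs t + 1)))).
    assert (He : 0 < exp (- (L * (Rabs t + 1)))) by apply exp_pos.
    assert (He1 : exp (- (L * (Rabs t + 1))) <= 1).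
    { assert (0 <= Rabs t) by apply Rabs_pos.
      assert (Q : exp (- (L * (Rabs t + 1))) <= exp 0) by (apply Rlt_le, exp_increasing; nra).
      rewrite exp_0 in Q. exact Q. }
    assert (Hw : z0 <= w < b) by (unfold w; split; nra).
    exists w. split; auto.
    assert (Hl : ln (b - w) = ln (b - z0) - L * (Rabs t + 1)).
    { unfold w. replace (b - (b - (b - z0) * exp (- (L * (Rabs t + 1))))) with ((b - z0) * exp (- (L * (Rabs t + 1)))) by ring.
      rewrite ln_mult, ln_exp; auto; lra. }
    specialize (Hm w Hw). unfold H in Hm. rewrite G0, Hl in Hm.
    assert (t <= Rabs t) by apply Rle_abs.
    assert (E : (ln (b - z0) - L * (Rabs t + 1)) / L = ln (b - z0) / L - (Rabs t + 1)) by (field; lra).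
    lra. }
  assert (Ex : forall t, 0 <= t -> exists w, z0 <= w < b /\ G w = t).
  { intros t Ht. destruct (Req_dec t 0) as [->|n]; [exists z0; split; auto; lra|].
    destruct (Div t) as [w1 [Hw1 Hw2]].
    assert (z0 < w1).
    { destruct (Req_dec z0 w1) as [<-|n']; [lra|lra]. }
    destruct (IVT_interv (fun w => G w - t) z0 w1) as [w [Hw Hw']]; auto.
    - intros a Ha. apply continuity_pt_minus; [apply Gcont; lra| apply continuity_pt_const; intros ? ?; auto].
    - lra.
    - lra.
    - exists w. split; [lra| simpl in Hw'; lra]. }
  set (zs := fun t => epsilon (inhabits z0) (fun w => z0 <= w < b /\ G w = t)).
  assert (ZS : forall t, 0 <= t -> z0 <= zs t < b /\ G (zs t) = t).
  { intros t Ht. unfold zs. apply epsilon_spec. apply Ex; auto. }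
  assert (Zmono : forall s t, 0 <= s -> s <= t -> zs s <= zs t).
  { intros s t Hs Hst. destruct (ZS s Hs) as [A1 A2]. destruct (ZS t ltac:(lra)) as [B1 B2].
    destruct (Rle_lt_dec (zs s) (zs t)) as [h|h]; auto.
    assert (G (zs t) <= G (zs s)) by (apply Gle; lra). destruct (Req_dec s t) as [->|n]; lra. }
  assert (Z0 : zs 0 = z0).
  { destruct (ZS 0 (Rle_refl 0)) as [A1 A2]. destruct (Rle_lt_dec (zs 0) z0) as [h|h]; [lra|].
    assert (G z0 < G (zs 0)) by (apply Glt; lra). lra. }
  assert (Zc : forall t, 0 < t -> continuity_pt zs t).
  { intros t Ht eps Heps. destruct (ZS t ltac:(lra)) as [[A1 A2] A3].
    assert (A1' : z0 < zs t).
    { destruct (Req_dec (zs t) z0) as [E|E]; [|lra]. rewrite E, G0 in A3. lra. }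
    set (wm := Rmax z0 (zs t - eps / 2)). set (wp := Rmin (zs t + eps / 2) ((zs t + b) / 2)).
    assert (z0 <= wm) by apply Rmax_l. assert (zs t - eps / 2 <= wm) by apply Rmax_r.
    assert (wm < zs t) by (apply Rmax_lub_lt; lra).
    assert (wp <= zs t + eps / 2) by apply Rmin_l. assert (wp <= (zs t + b) / 2) by apply Rmin_r.
    assert (zs t < wp) by (apply Rmin_glb_lt; lra).
    assert (G wm < t) by (rewrite <- A3; apply Glt; lra).
    assert (t < G wp) by (rewrite <- A3; apply Glt; lra).
    exists (Rmin t (Rmin (t - G wm) (G wp - t))). split.
    - apply Rmin_pos; [lra| apply Rmin_pos; lra].
    - intros x [_ Hx]. simpl in Hx. unfold R_dist in Hx |- *.
      assert (Rmin t (Rmin (t - G wm) (G wp - t)) <= t) by apply Rmin_l.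
      assert (Rmin t (Rmin (t - G wm) (G wp - t)) <= Rmin (t - G wm) (G wp - t)) by apply Rmin_r.
      assert (Rmin (t - G wm) (G wp - t) <= t - G wm) by apply Rmin_l.
      assert (Rmin (t - G wm) (G wp - t) <= G wp - t) by apply Rmin_r.
      apply Rabs_lt_between' in Hx.
      destruct (ZS x ltac:(lra)) as [[B1 B2] B3].
      assert (wm < zs x) by (apply Ginv; try lra).
      assert (zs x < wp) by (apply Ginv; try lra).
      apply Rabs_lt_between'. lra. }
  exists zs. split; [auto| split; [|split]].
  - intros t Ht. destruct (ZS t ltac:(lra)) as [[A1 A2] A3].
    assert (Hlb : 0 <= t / 2) by lra.
    destruct (ZS (t / 2) Hlb) as [[L1 L2] L3]. destruct (ZS (t + 1) ltac:(lra)) as [[U1 U2] U3].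
    assert (Prf : forall a, zs (t / 2) <= a <= zs (t + 1) -> derivable_pt G a).
    { intros a Ha. exists (f a). apply is_derive_Reals. apply GD. lra. }
    assert (Pinc : zs (t / 2) <= zs t <= zs (t + 1)) by (split; apply Zmono; lra).
    assert (Hid : forall x, t / 2 <= x <= t + 1 -> comp G zs x = id x).
    { intros x Hx. unfold comp, id. apply ZS. lra. }
    assert (Hdp : derive_pt G (zs t) (Prf (zs t) Pinc) = f (zs t)).
    { apply derive_pt_eq_0. apply is_derive_Reals. apply GD. lra. }
    assert (Hg : 0 < g (zs t)) by (apply Gp; lra).
    assert (Hne : derive_pt G (zs t) (Prf (zs t) Pinc) <> 0).
    { rewrite Hdp. unfold f. apply Rinv_neq_0_compat. lra. }
    assert (HH := derivable_pt_lim_recip_interv G zs (t / 2) (t + 1) t Prf (Zc t Ht) ltac:(lra) ltac:(lra) Pinc Hid Hne).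
    rewrite Hdp in HH. unfold f in HH. apply is_derive_Reals.
    replace (g (zs t)) with (1 / / g (zs t)) by (field; lra). exact HH.
  - intros eps Heps.
    set (w1 := Rmin (z0 + eps / 2) ((z0 + b) / 2)).
    assert (w1 <= z0 + eps / 2) by apply Rmin_l. assert (w1 <= (z0 + b) / 2) by apply Rmin_r.
    assert (z0 < w1) by (apply Rmin_glb_lt; lra).
    assert (0 < G w1) by (rewrite <- G0; apply Glt; lra).
    exists (G w1). split; auto. intros t Ht.
    destruct (ZS t ltac:(lra)) as [[A1 A2] A3].
    assert (zs t < w1) by (apply Ginv; lra).
    rewrite Z0. rewrite Rabs_right; lra.
  - intros t Ht; apply ZS; auto.
Qed.

Lemma first_root (g : R -> R) z0 M : (forall u, continuity_pt g u) -> 0 < g z0 -> z0 <= M -> g M < 0 ->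
  exists b, z0 < b /\ g b = 0 /\ forall u, z0 <= u < b -> 0 < g u.
Proof.
  intros Gc Hz HM HgM.
  set (S w := z0 <= w /\ forall u, z0 <= u <= w -> 0 < g u).
  destruct (completeness S) as [b [Hb1 Hb2]].
  { exists M. intros w [Hw1 Hw2]. destruct (Rle_lt_dec w M) as [h|h]; auto.
    specialize (Hw2 M ltac:(lra)). lra. }
  { exists z0. split; [lra|]. intros u Hu. replace u with z0 by lra. auto. }
  assert (Hzb : z0 <= b).
  { apply Hb1. split; [lra|]. intros u Hu. replace u with z0 by lra. auto. }
  assert (P1 : forall u, z0 <= u < b -> 0 < g u).
  { intros u Hu. apply NNPP. intros Hn.
    assert (b <= u); [|lra]. apply Hb2. intros w [Hw1 Hw2].
    destruct (Rle_lt_dec w u) as [h|h]; auto. exfalso. apply Hn, Hw2. lra. }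
  assert (Hgb : g b = 0).
  { destruct (Rtotal_order (g b) 0) as [h|[h|h]]; auto; exfalso.
    - destruct (cont_eps g b (Gc b) (- g b)) as [d [Hd Hd2]]; [lra|].
      destruct (Req_dec b z0) as [E|E]; [rewrite E in h; lra|].
      set (u := Rmax z0 (b - d / 2)).
      assert (z0 <= u) by apply Rmax_l. assert (b - d/2 <= u) by apply Rmax_r.
      assert (u < b) by (apply Rmax_lub_lt; lra).
      assert (Q := Hd2 u ltac:(rewrite Rabs_left; lra)).
      assert (0 < g u) by (apply P1; lra).
      apply Rabs_lt_between' in Q. lra.
    - destruct (cont_eps g b (Gc b) (g b)) as [d [Hd Hd2]]; [lra|].
      assert (b + d / 2 <= b); [|lra]. apply Hb1. split; [lra|].
      intros u Hu. destruct (Rlt_le_dec u b) as [h'|h']; [apply P1; lra|].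
      assert (Q := Hd2 u ltac:(rewrite Rabs_right; lra)). apply Rabs_lt_between' in Q. lra. }
  exists b. split; [|split]; auto.
  destruct (Req_dec z0 b) as [E|E]; [rewrite E in Hz; lra| lra].
Qed.

Lemma is_derive_scalR (f : R -> R) x l a : is_derive f x l -> is_derive (fun y => a * f y) x (a * l).
Proof. intros H. apply is_derive_Reals. apply (derivable_pt_lim_scal f a x l). apply is_derive_Reals; auto. Qed.

Lemma fwd th k s : 0 < k -> 0 <= s -> forward_complete th k s.
Proof.
  intros Hk Hs x0 z0. destruct (Req_dec x0 0) as [->|Hx].
  { exists (fun _ => 0), (fun _ => z0). split; [apply equil| auto]. }
  set (E0 := x0 ^ 2 / 2 + FF th k s z0).
  set (g := fun w => 2 * (E0 - FF th k s w)).
  assert (Gd : forall w, is_derive g w (- 2 * aa th k s w)).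
  { intros w. unfold g, FF, aa. auto_derive; auto. field. }
  assert (Gc : forall u, continuity_pt g u) by (intros u; exact (deriv_cont _ _ _ (Gd u))).
  assert (Hx2 : 0 < x0 ^ 2) by (assert (0 < x0 * x0) by (apply Rsqr_pos_lt; auto); simpl; lra).
  assert (Gz : g z0 = x0 ^ 2) by (unfold g, E0; field).
  destruct (cont_eps g z0 (Gc z0) (g z0 / 2)) as [d [Hd Hd2]]; [lra|].
  set (c := z0 - d / 2).
  assert (Left : forall u, c <= u <= z0 -> 0 < g u).
  { intros u Hu. assert (Q := Hd2 u ltac:(unfold c in Hu; rewrite Rabs_left1; lra)).
    apply Rabs_lt_between' in Q. lra. }
  set (M := Rabs th + 2 * Rabs E0 + Rabs z0 + 1 + 1).
  assert (HM : g M < 0).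
  { destruct (Rlt_le_dec (g M) 0) as [h|h]; auto. exfalso.
    assert (FF th k s M <= E0) by (unfold g in h; lra).
    assert (Q := zbound th k s E0 z0 M Hk Hs H). unfold M in Q. lra. }
  assert (Hz0M : z0 <= M).
  { assert (z0 <= Rabs z0) by apply Rle_abs. assert (0 <= Rabs th) by apply Rabs_pos.
    assert (0 <= Rabs E0) by apply Rabs_pos. unfold M; lra. }
  destruct (first_root g z0 M Gc ltac:(lra) Hz0M HM) as [b [Hzb [Hgb P1]]].
  set (Bb := Rabs z0 + Rabs b).
  set (L := 2 * (Bb + k + s * (Rabs th + Bb) ^ 2) + 1).
  assert (HL0 : 0 <= Bb + k + s * (Rabs th + Bb) ^ 2).
  { assert (0 <= s * (Rabs th + Bb) ^ 2) by (apply Rmult_le_pos; auto; apply pow2_ge_0).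
    assert (0 <= Rabs z0) by apply Rabs_pos. assert (0 <= Rabs b) by apply Rabs_pos. unfold Bb in *; lra. }
  assert (HL : 0 < L) by (unfold L; lra).
  assert (Lip : forall u, z0 <= u < b -> g u <= L * (b - u)).
  { intros u Hu.
    destruct (mvt g (fun w => - 2 * aa th k s w) u b) as [x [Hy1 Hy2]]; try lra.
    - intros x _; apply Gc.
    - intros x _; apply Gd.
    - assert (Hab : Rabs x <= Bb).
      { apply Rabs_le. assert (z0 <= Rabs z0) by apply Rle_abs. assert (-z0 <= Rabs z0) by (rewrite <- Rabs_Ropp; apply Rle_abs).
        assert (b <= Rabs b) by apply Rle_abs. assert (0 <= Rabs b) by apply Rabs_pos. assert (0 <= Rabs z0) by apply Rabs_pos.
        unfold Bb; split; lra. }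
      assert (Q := aa_bound th k s x Bb Hs Hab).
      assert (aa th k s x * (b - u) <= (Bb + k + s * (Rabs th + Bb) ^ 2) * (b - u)) by (apply Rmult_le_compat_r; lra).
      unfold L. nra. }
  assert (Pos : forall u, c < u < b -> 0 < g u).
  { intros u Hu. destruct (Rle_lt_dec u z0); [apply Left; lra| apply P1; lra]. }
  destruct (scalar_ode g c z0 b L ltac:(unfold c; lra) Gc Pos HL Lip) as [zs [Z0 [Dz [Rz Zr]]]].
  set (sg := x0 / Rabs x0).
  assert (Ha : 0 < Rabs x0) by (apply Rabs_pos_lt; auto).
  assert (Hsg : sg * sg = 1).
  { assert (Rabs x0 * Rabs x0 = x0 * x0) by (rewrite <- Rabs_mult; apply Rabs_right; nra).
    unfold sg. replace (x0 / Rabs x0 * (x0 / Rabs x0)) with ((x0 * x0) / (Rabs x0 * Rabs x0)) by (field; lra). rewrite <- H. field. lra. }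
  assert (Dh : forall w, c < w < b -> is_derive (fun w => sg * sqrt (g w)) w (sg * (- 2 * aa th k s w / (2 * sqrt (g w))))).
  { intros w Hw. apply is_derive_scalR. apply is_derive_sqrt; [apply Gd| apply Pos; auto]. }
  exists (fun t => sg * sqrt (g (zs t))), zs.
  split; [split|split].
  - intros t Ht. destruct (Zr t ltac:(lra)) as [A1 A2]. assert (Hp : 0 < g (zs t)) by (apply Pos; unfold c; lra).
    assert (Hq : g (zs t) = sqrt (g (zs t)) * sqrt (g (zs t))) by (rewrite sqrt_sqrt; lra).
    assert (Hq0 : 0 < sqrt (g (zs t))) by (apply sqrt_lt_R0; auto).
    split.
    + eapply is_derive_val.
      * apply (is_derive_comp (fun w => sg * sqrt (g w)) zs t _ _ (Dh (zs t) ltac:(unfold c; lra)) (Dz t Ht)).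
      * change (@eq R (g (zs t) * (sg * (- 2 * aa th k s (zs t) / (2 * sqrt (g (zs t))))))
                      (- (zs t + k + s * (th + zs t) ^ 2) * (sg * sqrt (g (zs t))))).
        set (q := sqrt (g (zs t))) in *. rewrite Hq. unfold aa. field. lra.
    + eapply is_derive_val; [apply (Dz t Ht)|].
      replace ((sg * sqrt (g (zs t))) ^ 2) with ((sg * sg) * (sqrt (g (zs t)) * sqrt (g (zs t)))) by ring.
      rewrite Hsg, <- Hq. ring.
  - apply rc_pair; auto. apply (rc_comp zs (fun w => sg * sqrt (g w))); auto.
    rewrite Z0. apply (deriv_cont _ _ _ (Dh z0 ltac:(unfold c; lra))).
  - simpl. rewrite Z0, Gz. rewrite <- (pow2_abs x0), sqrt_pow2 by apply Rabs_pos.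
    unfold sg. field. lra.
  - exact Z0.
Qed.

Theorem mainTheorem8 (theta k sigma : R) (hk : 0 < k) (hs : 0 <= sigma) :
  forward_complete theta k sigma /\
  lagrange_stable theta k sigma /\
  lyapunov_stable theta k sigma /\
  (forall z0, is_equilibrium theta k sigma 0 z0) /\
  GAOS theta k sigma /\
  (sigma = 0 ->
     ~ (exists T, 0 < T /\
          forall xi z, is_sol theta k sigma xi z ->
            nrm2 (xi 0) (z 0) <= sqrt (1 + (k + 1) ^ 2) ->
            forall t, T <= t -> Rabs (xi t) <= 1 / 2)).
Proof.
  split; [apply fwd; auto|]. split; [apply lagrange; auto|]. split; [apply lyap; auto|].
  split; [intros; apply equil|]. split; [split; [apply out_stable| apply attract]; auto|].
  intros ->. apply not_ugaos; auto.
Qed.
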